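(* Let $G$, $A$, $H$, $\beta$, $\sigma$, $\delta$ be as in the context, and let $(K,v)$ be an $\omega$-pseudo complete valued field of characteristic $0$ with residue characteristic $p$ whose value group is $A$, the smallest nonzero convex subgroup of $G$. If $f\in K(t^H,\beta)_\delta$ is nonzero, then $f$ has a multiplicative inverse in $K(t^H,\beta)_\delta$.
   Context: $G$ is an ordered abelian group, $A$ its smallest nonzero convex subgroup, $H=G/A$ with the induced order, $\rho:G\to H$ the projection; $\alpha:H\to G$ is a transversal ($\rho\alpha=\mathrm{id}_H$, $\alpha(0)=0$) and $\beta(h,h')=\alpha(h+h')-\alpha(h)-\alpha(h')\in A$. $\sigma:A\to K^\times$ is a cross-section (homomorphism with $v(\sigma(a))=a$). $\delta$ is an infinite cardinal and $K(t^H,\beta)_\delta$ is the set of formal sums $\sum_{h\in S}a_ht^h$ with $S\subseteq H$ well ordered, $|S|\le\delta$, $a_h\in K$, with coefficientwise addition and multiplication $\left(\sum a_ht^h\right)\left(\sum b_ht^h\right)=\sum_l\left(\sum_{h+h'=l}a_hb_{h'}\sigma(-\beta(h,h'))\right)t^l$. A sequence $(c_n)_{n<\omega}$ in a valued field is pseudo-Cauchy if for some $n_0$, $v(c_l-c_m)>v(c_m-c_n)$ whenever $n_0<n<m<l$; $c$ is a pseudo-limit if $v(c-c_n)=v(c_{n+1}-c_n)$ for all large $n$; $\omega$-pseudo complete means every pseudo-Cauchy sequence indexed by $\omega$ has a pseudo-limit. *)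

(* Defs.v *)
From mathcomp Require Import all_boot all_order all_algebra.
Set Implicit Arguments. Unset Strict Implicit. Unset Printing Implicit Defensive.
Import GRing.Theory.
Local Open Scope ring_scope.

Section Defs.

Variable G : zmodType.
Variable le : G -> G -> Prop.

Definition ordered_abelian_group : Prop :=
  [/\ (forall x, le x x),
      (forall x y, le x y -> le y x -> x = y),
      (forall x y z, le x y -> le y z -> le x z),
      (forall x y, le x y \/ le y x)
    & (forall x y z, le x y -> le (x + z) (y + z))].

Definition ltG (x y : G) : Prop := le x y /\ x <> y.

Definition subgroup (B : G -> Prop) : Prop :=
  B 0 /\ (forall x y, B x -> B y -> B (x - y)).

Definition convex (B : G -> Prop) : Prop :=
  forall a b x, B a -> B b -> le a x -> le x b -> B x.

Definition convex_subgroup (B : G -> Prop) : Prop := subgroup B /\ convex B.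

Definition nonzero_set (B : G -> Prop) : Prop := exists a, B a /\ a <> 0.

Definition smallest_nonzero_convex_subgroup (A : G -> Prop) : Prop :=
  [/\ convex_subgroup A, nonzero_set A &
      forall B, convex_subgroup B -> nonzero_set B -> forall x, A x -> B x].

Variable H : zmodType.
Variable rho : G -> H.

(* H is the quotient G/A with projection rho: rho is a surjective group
   homomorphism with kernel exactly A. *)
Definition quotient_projection (A : G -> Prop) : Prop :=
  [/\ (forall x y, rho (x + y) = rho x + rho y),
      (forall h, exists g, rho g = h)
    & (forall g, rho g = 0 <-> A g)].

Definition leH (h h' : H) : Prop :=
  exists g g', [/\ rho g = h, rho g' = h' & le g g'].

Variable alpha : H -> G.

Definition transversal : Prop := (forall h, rho (alpha h) = h) /\ alpha 0 = 0.

Definition beta (h h' : H) : G := alpha (h + h') - alpha h - alpha h'.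

Variable K : fieldType.
Variable v : K -> G.   (* the value of v at 0 is irrelevant: v(0) = infinity *)

Definition valuation_onto (A : G -> Prop) : Prop :=
  [/\ (forall x y, x != 0 -> y != 0 -> v (x * y) = v x + v y),
      (forall x y, x != 0 -> y != 0 -> x + y != 0 ->
          le (v x) (v (x + y)) \/ le (v y) (v (x + y))),
      (forall x, x != 0 -> A (v x))
    & (forall a, A a -> exists x, x != 0 /\ v x = a)].

(* comparisons of values in G ∪ {infinity}, with v(0) = infinity *)
Definition vlt (x y : K) : Prop := x != 0 /\ (y = 0 \/ ltG (v x) (v y)).
Definition veq (x y : K) : Prop :=
  (x = 0 /\ y = 0) \/ [/\ x != 0, y != 0 & v x = v y].

Definition pseudo_cauchy (c : nat -> K) : Prop :=
  exists n0 : nat, forall n m l : nat, (n0 < n)%N -> (n < m)%N -> (m < l)%N ->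
    vlt (c m - c n) (c l - c m).

Definition pseudo_limit (c : nat -> K) (x : K) : Prop :=
  exists N : nat, forall n : nat, (N <= n)%N -> veq (x - c n) (c n.+1 - c n).

Definition omega_pseudo_complete : Prop :=
  forall c : nat -> K, pseudo_cauchy c -> exists x, pseudo_limit c x.

Definition char0 : Prop := forall n : nat, (n%:R : K) = 0 -> n = 0%N.

(* the residue field O_v / m_v has characteristic p: the kernel of
   Z -> O_v/m_v is pZ *)
Definition residue_char (p : nat) : Prop :=
  forall n : nat, ((n%:R : K) = 0 \/ ltG 0 (v n%:R)) <-> (p %| n)%N.

Variable sigma : G -> K.

Definition cross_section (A : G -> Prop) : Prop :=
  [/\ (forall a b, A a -> A b -> sigma (a + b) = sigma a * sigma b),
      (forall a, A a -> sigma a != 0)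
    & (forall a, A a -> v (sigma a) = a)].

(* a formal sum sum_h f_h t^h is represented by its coefficient function
   f : H -> K; its support is {h | f h != 0}. The cardinal delta is
   represented by a type D. *)
Variable D : Type.

Definition infinite_cardinal : Prop :=
  exists e : nat -> D, forall m n, e m = e n -> m = n.

Definition support_well_ordered (f : H -> K) : Prop :=
  forall P : H -> Prop, (exists h, P h /\ f h != 0) ->
    exists h0, [/\ P h0, f h0 != 0 &
                   forall h, P h -> f h != 0 -> leH h0 h].

Definition support_card_le_delta (f : H -> K) : Prop :=
  exists i : H -> D, forall h h', f h != 0 -> f h' != 0 -> i h = i h' -> h = h'.

Definition in_series_ring (f : H -> K) : Prop :=
  support_well_ordered f /\ support_card_le_delta f.

(* c is the coefficient at t^l of the product f * g, i.e.
   c = sum_{h + h' = l} f_h g_h' sigma(-beta(h,h')), the sum ranging over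
   the (finitely many) h with f_h != 0 and g_(l-h) != 0. *)
Definition prod_coef (f g : H -> K) (l : H) (c : K) : Prop :=
  exists s : seq H,
    [/\ uniq s,
        (forall h, h \in s <-> (f h != 0 /\ g (l - h) != 0))
      & c = \sum_(h <- s) f h * g (l - h) * sigma (- beta h (l - h))].

Definition one_series (l : H) : K := if l == 0 then 1 else 0.

Definition is_inverse (f g : H -> K) : Prop :=
  (forall l, prod_coef f g l (one_series l)) /\
  (forall l, prod_coef g f l (one_series l)).

End Defs.

(* Main.v *)
From mathcomp Require Import all_boot all_order all_algebra.
Require Import Defs.
From mathcomp Require Import boolp classical_sets.
From Stdlib Require Import Classical.
Set Implicit Arguments. Unset Strict Implicit. Unset Printing Implicit Defensive.
Import GRing.Theory.

Section Compare.
Variable T : Type.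

Definition cext (a b : (T -> Prop) * (T -> T)) :=
  (forall u, a.1 u -> b.1 u) /\ (forall u, a.1 u -> b.2 u = a.2 u).

Lemma cext_refl a : cext a a.
Proof. by split. Qed.

Lemma cext_trans a b c : cext a b -> cext b c -> cext a c.
Proof.
move=> [ab1 ab2] [bc1 bc2]; split=> u au; first by apply: bc1; apply: ab1.
by rewrite bc2 ?ab2 //; apply: ab1.
Qed.

Lemma comparable_sets (X Y : T -> Prop) :
  (exists j : T -> T, (forall x, X x -> Y (j x)) /\
      forall x y, X x -> X y -> j x = j y -> x = y) \/
  (exists k : T -> T, (forall y, Y y -> X (k y)) /\
      forall x y, Y x -> Y y -> k x = k y -> x = y).
Proof.
pose valid (a : (T -> Prop) * (T -> T)) :=
  (forall u, a.1 u -> X u /\ Y (a.2 u)) /\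
  (forall u w, a.1 u -> a.1 w -> a.2 u = a.2 w -> u = w).
pose O := {a | valid a}.
have v0 : valid (fun _ => False, id) by split.
pose R (a b : O) := `[< cext (sval a) (sval b) >].
have [m mmax] : exists t : O, premaximal (fun a b => R a b) t.
  apply: (@ZL_preorder O (exist _ _ v0)).
  - by move=> t; apply/asboolP/cext_refl.
  - by move=> r s t /asboolP rs /asboolP st; apply/asboolP; apply: cext_trans st.
  move=> C Ctot.
  have [Cne|C0] := pselect (exists c, C c); last first.
    by exists (exist _ _ v0) => s Cs; exfalso; apply: C0; exists s.
  pose dom u := exists c, C c /\ (sval c).1 u.
  pose fn u := match pselect (dom u) with
    left p => (sval (sval (cid p))).2 u | right _ => u end.
  have key c : C c -> forall u, (sval c).1 u -> fn u = (sval c).2 u.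
    move=> Cc u cu; rewrite /fn; case: pselect => [p|np]; last first.
      by exfalso; apply: np; exists c.
    case: (cid p) => c' [Cc' c'u] /=.
    case: (Ctot _ _ Cc Cc') => /asboolP [_ E]; first exact: E.
    by rewrite E.
  have vd : valid (dom, fn).
    split=> [u [c [Cc cu]]|u w [c [Cc cu]] [c' [Cc' c'w]]] /=.
      by rewrite (key c) //; case: (svalP c) => /(_ u cu).
    rewrite (key c) // (key c') //.
    case: (Ctot _ _ Cc Cc') => /asboolP [E1 E2].
      rewrite -E2 //; apply: (svalP c').2 => //; exact: E1.
    rewrite -E2 //; apply: (svalP c).2 => //; exact: E1.
  exists (exist _ _ vd) => s Cs; apply/asboolP; split => /=.
    by move=> u su; exists s.
  by move=> u su; apply: key.
case: m mmax => [[dm p] vm] mmax /=; case: (vm) => vm1 vm2.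
have [allX|] := pselect (forall x, X x -> dm x).
  left; exists p; split; first by move=> x /allX /vm1 [].
  by move=> x y /allX ? /allX ?; apply: vm2.
move=> /existsNP [x0 /not_implyP [Xx0 ndx0]].
have [allY|] := pselect (forall y, Y y -> exists u, dm u /\ p u = y).
  right; exists (fun y => match pselect (Y y) with
     left q => sval (cid (allY y q)) | right _ => y end); split.
    move=> y Yy; case: pselect => // q; case: (cid _) => u [du _] /=.
    by case: (vm1 u du).
  move=> y y' Yy Yy'; case: pselect => // q; case: pselect => // q'.
  case: (cid _) => u [du pu]; case: (cid _) => u' [du' pu'] /= E.
  by rewrite -pu -pu' E.
move=> /existsNP [y0 /not_implyP [Yy0 nimg]].
pose dm' u := dm u \/ u = x0.
pose p' u := match pselect (u = x0) with left _ => y0 | right _ => p u end.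
have vd' : valid (dm', p').
  split=> [u /= [du|->]|u w /= du dw].
  - rewrite /p'; case: pselect => [ux0|_]; last exact: vm1.
    by exfalso; apply: ndx0; rewrite -ux0.
  - by rewrite /p'; case: pselect.
  rewrite /p'; case: pselect => [->|nu]; case: pselect => [->|nw] //.
  - move=> E; exfalso; apply: nimg; exists w; split => //.
    by case: dw.
  - move=> E; exfalso; apply: nimg; exists u; split => //.
    by case: du.
  by case: du => // du; case: dw => // dw; apply: vm2.
have := mmax (exist _ _ vd').
have ext1 : R (exist _ (dm, p) vm) (exist _ _ vd').
  apply/asboolP; split => /= u du; first by left.
  rewrite /p'; case: pselect => // ux0; exfalso; apply: ndx0; by rewrite -ux0.
move=> /(_ ext1) /asboolP [/= sub _].
by exfalso; apply: ndx0; apply: sub; right.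
Qed.

End Compare.


Section Pairing.
Variables (T : Type) (e : nat -> T) (einj : injective e).

Definition pext (a b : (T -> Prop) * (T * T -> T)) :=
  (forall u, a.1 u -> b.1 u) /\
  (forall x y, a.1 x -> a.1 y -> b.2 (x, y) = a.2 (x, y)).

Lemma pairing : exists pi : T * T -> T, injective pi.
Proof.
pose valid (a : (T -> Prop) * (T * T -> T)) :=
  [/\ (forall n, a.1 (e n)),
      (forall x y, a.1 x -> a.1 y -> a.1 (a.2 (x, y))) &
      (forall x y x' y', a.1 x -> a.1 y -> a.1 x' -> a.1 y' ->
          a.2 (x, y) = a.2 (x', y') -> x = x' /\ y = y')].
pose O := {a | valid a}.
pose inv x := match pselect (exists n, e n = x) with
   left q => sval (cid q) | right _ => 0%N end.
have invK n : inv (e n) = n.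
  rewrite /inv; case: pselect => [q|nq]; last by exfalso; apply: nq; exists n.
  by case: (cid q) => m /= /einj.
pose B0 x := exists n, e n = x.
pose f0 (xy : T * T) := e (pickle (inv xy.1, inv xy.2)).
have v0 : valid (B0, f0).
  split => /=.
  - by move=> n; exists n.
  - by move=> x y _ _; eexists.
  move=> x y x' y' [n <-] [m <-] [n' <-] [m' <-].
  rewrite /f0 /= !invK => /einj /(pcan_inj (@pickleK _)) [-> ->]; done.
pose R (a b : O) := `[< pext (sval a) (sval b) >].
have [m mmax] : exists t : O, premaximal (fun a b => R a b) t.
  apply: (@ZL_preorder O (exist _ _ v0)).
  - by move=> t; apply/asboolP; split.
  - move=> r s t /asboolP [rs1 rs2] /asboolP [st1 st2]; apply/asboolP; split.
      by move=> u /rs1 /st1.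
    by move=> x y rx ry; rewrite st2 ?rs2 //; [apply: rs1 | apply: rs1].
  move=> C Ctot.
  have [Cne|C0] := pselect (exists c, C c); last first.
    by exists (exist _ _ v0) => s Cs; exfalso; apply: C0; exists s.
  have up2 c c' : C c -> C c' -> exists d, [/\ C d, pext (sval c) (sval d) &
                                               pext (sval c') (sval d)].
    move=> Cc Cc'; case: (Ctot _ _ Cc Cc') => /asboolP E.
      by exists c'; split => //; split.
    by exists c; split => //; split.
  pose dom u := exists c, C c /\ (sval c).1 u.
  pose dom2 (xy : T * T) := exists c, C c /\ (sval c).1 xy.1 /\ (sval c).1 xy.2.
  pose fn xy := match pselect (dom2 xy) with
    left p => (sval (sval (cid p))).2 xy | right _ => xy.1 end.
  have key c : C c -> forall x y, (sval c).1 x -> (sval c).1 y ->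
      fn (x, y) = (sval c).2 (x, y).
    move=> Cc x y cx cy; rewrite /fn; case: pselect => [p|np]; last first.
      by exfalso; apply: np; exists c.
    case: (cid p) => c' [Cc' [c'x c'y]] /=.
    case: (Ctot _ _ Cc Cc') => /asboolP [_ E]; first exact: E.
    by rewrite E.
  have vd : valid (dom, fn).
    split => /=.
    - by move=> n; case: Cne => c Cc; exists c; split => //; case: (svalP c).
    - move=> x y [c [Cc cx]] [c' [Cc' c'y]].
      case: (up2 _ _ Cc Cc') => d [Cd [E1 _] [E2 _]].
      exists d; split => //; rewrite (key d) //; [|exact: E1|exact: E2].
      by case: (svalP d) => _ /(_ x y (E1 _ cx) (E2 _ c'y)).
    move=> x y x' y' [c1 [C1 c1x]] [c2 [C2 c2y]] [c3 [C3 c3x]] [c4 [C4 c4y]].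
    case: (up2 _ _ C1 C2) => d1 [Cd1 [E1 _] [E2 _]].
    case: (up2 _ _ C3 C4) => d2 [Cd2 [E3 _] [E4 _]].
    case: (up2 _ _ Cd1 Cd2) => d [Cd [E5 _] [E6 _]].
    have dx : (sval d).1 x by apply/E5/E1.
    have dy : (sval d).1 y by apply/E5/E2.
    have dx' : (sval d).1 x' by apply/E6/E3.
    have dy' : (sval d).1 y' by apply/E6/E4.
    rewrite (key d) // (key d) //.
    by case: (svalP d) => _ _; apply.
  exists (exist _ _ vd) => s Cs; apply/asboolP; split => /=.
    by move=> u su; exists s.
  by move=> x y sx sy; apply: key.
case: m mmax => [[B f] vm] mmax /=; case: (vm) => /= [Be Bf finj].
have [[j [jB jinj]]|[k [kB kinj]]] := comparable_sets B (fun x => ~ B x).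
  exfalso.
  pose B' x := B x \/ exists b, B b /\ j b = x.
  pose base x := match pselect (exists b, B b /\ j b = x) with
     left q => sval (cid q) | right _ => x end.
  have baseB x : B x -> base x = x.
    move=> Bx; rewrite /base; case: pselect => // q.
    by case: (cid q) => b [Bb jb] /=; exfalso; apply: (jB b Bb); rewrite jb.
  have baseN x : ~ B x -> B' x -> B (base x) /\ j (base x) = x.
    move=> nBx [//|q]; rewrite /base; case: pselect => // q'.
    by case: (cid q') => b [Bb jb].
  have baseIn x : B' x -> B (base x).
    move=> Bx; have [bx|nbx] := pselect (B x); first by rewrite baseB.
    by case: (baseN x nbx Bx).
  pose tag x := if `[< B x >] then 0%N else 1%N.
  pose f' (xy : T * T) := if `[< B xy.1 /\ B xy.2 >] then f xy
      else j (f (f (e (tag xy.1 + 2 * tag xy.2)%N, base xy.1), base xy.2)).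
  have inB z w t : B' z -> B' w -> B (f (f (e t, base z), base w)).
    by move=> Bz Bw; apply: (Bf); [apply: (Bf) => //; apply: (baseIn) | apply: (baseIn)].
  have v' : valid (B', f').
    split => /=.
    - by move=> n; left.
    - move=> x y Bx By; rewrite /f'; case: asboolP => /= [[bx by']|nb].
        by left; apply: (Bf).
      right; exists (f (f (e (tag x + 2 * tag y)%N, base x), base y)); split => //.
      exact: inB.
    move=> x y x' y' Bx By Bx' By'; rewrite /f' /=.
    case: asboolP => [[bx by']|nb]; case: asboolP => [[bx' by'']|nb'].
    - exact: (finj).
    - move=> E; exfalso; apply: (jB (f (f (e (tag x' + 2 * tag y')%N, base x'), base y'))).
        exact: inB.
      by rewrite -E; apply: (Bf).
    - move=> E; exfalso; apply: (jB (f (f (e (tag x + 2 * tag y)%N, base x), base y))).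
        exact: inB.
      by rewrite E; apply: (Bf).
    have i1 : B (f (e (tag x + 2 * tag y)%N, base x)) by apply: (Bf) => //; apply: (baseIn).
    have i2 : B (f (e (tag x' + 2 * tag y')%N, base x')) by apply: (Bf) => //; apply: (baseIn).
    move=> /jinj E.
    have := E (Bf _ _ i1 (baseIn _ By)) (Bf _ _ i2 (baseIn _ By')).
    move=> /finj -/(_ i1 (baseIn _ By) i2 (baseIn _ By')) [E1 E2].
    move: E1 => /finj -/(_ (Be _) (baseIn _ Bx) (Be _) (baseIn _ Bx')) [/einj Et E3].
    have tg z : (tag z = 0 /\ B z) \/ (tag z = 1 /\ ~ B z).
      by rewrite /tag; case: asboolP => ?; [left|right].
    have same z z' : B' z -> B' z' -> tag z = tag z' -> base z = base z' -> z = z'.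
      move=> Bz Bz'; case: (tg z) => [[-> bz]|[-> bz]]; case: (tg z') => [[-> bz']|[-> bz']] //.
        by rewrite !baseB.
      move=> _ Eb; case: (baseN _ bz Bz) => _ <-; case: (baseN _ bz' Bz') => _ <-.
      by rewrite Eb.
    have [tx ty] : tag x = tag x' /\ tag y = tag y'.
      by move: Et; case: (tg x) => [[-> _]|[-> _]]; case: (tg y) => [[-> _]|[-> _]];
         case: (tg x') => [[-> _]|[-> _]]; case: (tg y') => [[-> _]|[-> _]];
         move/eqP.
    by split; apply: same.
  have := mmax (exist _ _ v').
  have ext1 : R (exist _ (B, f) vm) (exist _ _ v').
    apply/asboolP; split => /=; first by move=> u Bu; left.
    by move=> x y bx by'; rewrite /f'; case: asboolP => // [[]].
  move=> /(_ ext1) /asboolP [/= sub _].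
  have : B' (j (e 0)) by right; exists (e 0).
  by move=> /sub; apply: jB.
pose iota x := if `[< B x >] then f (e 0, x) else f (e 1, k x).
have iotaB x : B (iota x).
  by rewrite /iota; case: asboolP => bx; apply: (Bf) => //; apply: kB.
have iotainj : injective iota.
  move=> x y; rewrite /iota.
  case: asboolP => bx; case: asboolP => by'.
  - by move=> /finj -/(_ (Be _) bx (Be _) by') [].
  - by move=> /finj -/(_ (Be _) bx (Be _) (kB _ by')) [/einj].
  - by move=> /finj -/(_ (Be _) (kB _ bx) (Be _) by') [/einj].
  by move=> /finj -/(_ (Be _) (kB _ bx) (Be _) (kB _ by')) [_ /kinj]; apply.
exists (fun xy => f (iota xy.1, iota xy.2)) => [[x y] [x' y']] /= E.
by case: (finj _ _ _ _ (iotaB x) (iotaB y) (iotaB x') (iotaB y') E) => /iotainj -> /iotainj ->.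
Qed.

Lemma seq_code : exists c : seq T -> T, injective c.
Proof.
have [pi piinj] := pairing.
pose fix code (s : seq T) := if s is x :: s' then pi (x, code s') else e 0.
exists (fun s => pi (e (size s), code s)) => s t /piinj [/einj].
elim: s t => [|x s IH] [|y t] //= [Est] /piinj [-> /(IH _ Est) ->] //.
Qed.

End Pairing.


Lemma chain_nat (T : Type) (Q : T -> T -> Prop) (x : nat -> T) :
  (forall a, Q a a) -> (forall a b c, Q a b -> Q b c -> Q a c) ->
  (forall n, Q (x n) (x n.+1)) -> forall m n, (m <= n)%N -> Q (x m) (x n).
Proof.
move=> Qr Qt Qs m; elim=> [|n IH]; first by rewrite leqn0 => /eqP ->.
rewrite leq_eqVlt => /orP [/eqP ->//|]; rewrite ltnS => /IH h.
exact: Qt h (Qs n).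
Qed.

Lemma mono_nat (p : nat -> nat) : (forall n, p n < p n.+1)%N ->
  forall m n, (m < n)%N -> (p m < p n)%N.
Proof.
move=> hp m n lmn.
have := @chain_nat _ (fun a b => a <= b)%N p (@leqnn) (fun a b c => @leq_trans b a c).
move=> /(_ (fun k => ltnW (hp k)) m.+1 n lmn) h.
exact: leq_trans (hp m) h.
Qed.

Section WO.
Local Open Scope ring_scope.
Variable H : zmodType.
Variable R : H -> H -> Prop.
Hypothesis Rrefl : forall x, R x x.
Hypothesis Rtrans : forall x y z, R x y -> R y z -> R x z.
Hypothesis Ranti : forall x y, R x y -> R y x -> x = y.
Hypothesis Rtot : forall x y, R x y \/ R y x.
Hypothesis Radd : forall x y z, R x y -> R (x + z) (y + z).

Lemma Raddl x y z : R x y -> R (z + x) (z + y).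
Proof. by rewrite ![z + _]addrC; apply: Radd. Qed.

Lemma Radd2 a b c d : R a b -> R c d -> R (a + c) (b + d).
Proof. move=> h1 h2; apply: Rtrans (Radd c h1) (Raddl b h2). Qed.

Lemma Rcancel x y z : R (x + z) (y + z) -> R x y.
Proof. by move=> /(Radd (- z)); rewrite !addrK. Qed.

Lemma Rsubr l a b : R (l - a) (l - b) -> R b a.
Proof.
move=> /(Radd (- l)); rewrite (addrAC l (- a)) (addrAC l (- b)) subrr !add0r => /(Radd (a + b)).
by rewrite addKr (addrC a b) addKr.
Qed.

Definition WO (X : H -> Prop) := forall P : H -> Prop, (exists h, P h /\ X h) ->
  exists h0, [/\ P h0, X h0 & forall h, P h -> X h -> R h0 h].

Lemma WO_sub (X Y : H -> Prop) : (forall h, X h -> Y h) -> WO Y -> WO X.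
Proof.
move=> XY wY P [h [Ph Xh]].
have [h0 [[Ph0 Xh0] _ m]] := wY (fun h => P h /\ X h) (ex_intro _ h (conj (conj Ph Xh) (XY _ Xh))).
by exists h0; split => // h' Ph' Xh'; apply: m => //; apply: XY.
Qed.

Lemma WO_shift (X : H -> Prop) c : WO X -> WO (fun h => X (h + c)).
Proof.
move=> wX P [h [Ph Xh]].
have Phc : P (h + c - c) by rewrite addrK.
have [y0 [Py0 Xy0 m]] := wX (fun y => P (y - c)) (ex_intro _ (h + c) (conj Phc Xh)).
exists (y0 - c); split => //; first by rewrite subrK.
move=> h' Ph' Xh'; apply: (@Rcancel _ _ c); rewrite subrK; apply: m => //.
by rewrite addrK.
Qed.

Lemma WO_subseq (X : H -> Prop) (u : nat -> H) : WO X -> (forall n, X (u n)) ->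
  exists phi : nat -> nat, (forall n, phi n < phi n.+1)%N /\
     (forall n, R (u (phi n)) (u (phi n.+1))).
Proof.
move=> wX Xu.
have hpsi k : exists j, (k <= j)%N /\ forall j', (k <= j')%N -> R (u j) (u j').
  have [h0 [[j [kj <-]] _ m]] := wX (fun h => exists j, (k <= j)%N /\ u j = h)
     (ex_intro _ (u k) (conj (ex_intro _ k (conj (leqnn k) erefl)) (Xu k))).
  by exists j; split => // j' kj'; apply: m => //; exists j'.
pose psi k := sval (cid (hpsi k)).
have psiP k : (k <= psi k)%N /\ forall j', (k <= j')%N -> R (u (psi k)) (u j').
  exact: (svalP (cid (hpsi k))).
have psi1 k : (k <= psi k)%N by case: (psiP k).
have psi2 k j' : (k <= j')%N -> R (u (psi k)) (u j') by case: (psiP k) => _; apply.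
pose fix phi n := if n is n'.+1 then psi (phi n').+1 else psi 0.
have h2 n : (phi n < phi n.+1)%N by apply: psi1.
exists phi; split => n; first exact: h2.
case: n => [|n]; apply: psi2; first exact: leq0n.
exact: leq_trans (h2 n) (ltnW (h2 n.+1)).
Qed.

Lemma WO_chain (X : H -> Prop) (u : nat -> H) : WO X -> (forall n, X (u n)) ->
  exists phi : nat -> nat, (forall m n, (m < n)%N -> (phi m < phi n)%N) /\
     (forall m n, (m <= n)%N -> R (u (phi m)) (u (phi n))).
Proof.
move=> wX Xu; have [phi [h1 h2]] := WO_subseq wX Xu.
exists phi; split; first exact: mono_nat.
by apply: (@chain_nat _ R (fun n => u (phi n))).
Qed.

Lemma WO_fiber (X Y : H -> Prop) l : WO X -> WO Y ->
  exists s : seq H, uniq s /\ forall h, h \in s <-> X h /\ Y (l - h).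
Proof.
move=> wX wY; apply: NNPP => nos.
pose F h := X h /\ Y (l - h).
have nxt s : (forall h, h \in s -> F h) -> uniq s -> exists h, F h /\ h \notin s.
  move=> sF us; apply: NNPP => nh; apply: nos; exists s; split => // h; split.
    exact: sF.
  move=> Fh; apply: NNPP => hs; apply: nh; exists h; split => //; exact/negP.
pose np (s : seq H) := match pselect (exists h, F h /\ h \notin s) with
   left q => sval (cid q) | right _ => 0 end.
pose fix pre n : seq H := if n is n'.+1 then np (pre n') :: pre n' else [::].
have inv n : (forall h, h \in pre n -> F h) /\ uniq (pre n).
  elim: n => [|n [IH1 IH2]] //=.
  have := nxt _ IH1 IH2; rewrite /np; case: pselect => // q _.
  case: (cid q) => h [Fh hn] /=; split; last by rewrite hn.
  by move=> h'; rewrite in_cons => /orP [/eqP ->|/IH1].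
have uF n : F (np (pre n)) /\ np (pre n) \notin pre n.
  case: (inv n) => i1 i2; have := nxt _ i1 i2; rewrite /np; case: pselect => // q _.
  by case: (cid q).
pose u n := np (pre n).
have uF' n : F (u n) /\ u n \notin pre n := uF n.
have umem m n : (m < n)%N -> u m \in pre n.
  elim: n => // n IH; rewrite ltnS leq_eqVlt => /orP [/eqP ->|/IH h] /=.
    by rewrite in_cons eqxx.
  by rewrite in_cons h orbT.
have uinj m n : m != n -> u m != u n.
  move=> mn; case: (ltngtP m n) => [lmn|lnm|emn].
  - apply/eqP => E; have := (uF' n).2; by rewrite -E umem.
  - apply/eqP => E; have := (uF' m).2; by rewrite E umem.
  by rewrite emn eqxx in mn.
have [phi [p1 p2]] := WO_chain wX (fun n => (uF n).1.1).
have [psi [q1 q2]] := WO_chain wY (u := fun n => l - u (phi n)) (fun n => (uF (phi n)).1.2).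
have r1 := p2 _ _ (ltnW (q1 0 1 isT)).
have r2 := Rsubr (q2 0 1 isT).
have := uinj _ _ (negbT (ltn_eqF (p1 _ _ (q1 0 1 isT)))).
by rewrite /u (Ranti r1 r2) eqxx.
Qed.

Variable S : H -> Prop.
Hypothesis wS : WO S.
Hypothesis Spos : forall s, S s -> R 0 s.

Definition Mset x := exists w : seq H, (forall y, y \in w -> S y) /\ x = \sum_(y <- w) y.
Definition sortedP (w : seq H) :=
  forall i, (i.+1 < size w)%N -> R (nth 0 w i.+1) (nth 0 w i).
Definition Lw w := (forall y, y \in w -> S y) /\ sortedP w.
Definition emb (u w : seq H) := (size u <= size w)%N /\
  forall k, (k < size u)%N -> R (nth 0 u k) (nth 0 w k).

Lemma sorted_rep x : Mset x -> exists w, Lw w /\ x = \sum_(y <- w) y.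
Proof.
case=> w [wS' ->].
pose leb (a b : H) := `[< R b a >].
have tot : total leb.
  by move=> a b; apply/orP; case: (Rtot a b) => h; [right|left]; apply/asboolP.
have tr : transitive leb.
  by move=> b a c /asboolP h1 /asboolP h2; apply/asboolP; exact: Rtrans h2 h1.
exists (sort leb w); split; last first.
  by apply: perm_big; rewrite perm_sym; apply: permEl; apply: perm_sort.
split; first by move=> y; rewrite mem_sort; apply: wS'.
move=> i hi; have := sorted_ltn_nth tr 0 (sort_sorted tot w) i i.+1.
rewrite !inE; apply; [exact: ltnW | exact: hi | exact: ltnSn].
Qed.

Lemma sum_nonneg (w : seq H) : (forall y, y \in w -> R 0 y) -> R 0 (\sum_(y <- w) y).
Proof.
elim: w => [|a w IH] h; first by rewrite big_nil.
rewrite big_cons; have h1 : R 0 a by apply: h; rewrite mem_head.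
have h2 : R 0 (\sum_(y <- w) y) by apply: IH => y yw; apply: h; rewrite in_cons yw orbT.
by have := Radd2 h1 h2; rewrite add0r.
Qed.

Lemma emb_sum u w : (forall y, y \in w -> R 0 y) -> emb u w ->
  R (\sum_(y <- u) y) (\sum_(y <- w) y).
Proof.
elim: u w => [|a u IH] w hw [hs hk]; first by rewrite big_nil; apply: sum_nonneg.
case: w hw hs hk => [|b w] //= hw hs hk.
rewrite !big_cons; apply: Radd2 => //; first exact: (hk 0%N).
apply: IH; first by move=> y yw; apply: hw; rewrite in_cons yw orbT.
by split => // k hk'; apply: (hk k.+1).
Qed.

Definition bad (u : nat -> seq H) :=
  (forall n, Lw (u n)) /\ forall i j, (i < j)%N -> ~ emb (u i) (u j).

Definition extp (p : seq (seq H)) :=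
  exists u, bad u /\ forall i, (i < size p)%N -> u i = nth [::] p i.

Lemma ext_min p : extp p -> exists w, extp (rcons p w) /\
  forall w', extp (rcons p w') -> (size w <= size w')%N.
Proof.
move=> [u [bu hu]].
have ex : exists n, `[< exists w, extp (rcons p w) /\ size w = n >].
  exists (size (u (size p))); apply/asboolP; exists (u (size p)); split => //.
  exists u; split => // i; rewrite size_rcons ltnS leq_eqVlt => /orP [/eqP ->| hi].
    by rewrite nth_rcons ltnn eqxx.
  by rewrite nth_rcons hi; apply: hu.
case: (ex_minnP ex) => n /asboolP [w [ew sw]] hmin.
exists w; split => // w' ew'; rewrite sw; apply: hmin; apply/asboolP.
by exists w'.
Qed.

Lemma nobad : ~ exists u, bad u.
Proof.
move=> [u0 bu0].
have e0 : extp [::] by exists u0; split.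
pose nxt p := match pselect (extp p) with
   left q => sval (cid (ext_min q)) | right _ => [::] end.
have nxtP p : extp p -> extp (rcons p (nxt p)) /\
    forall w', extp (rcons p w') -> (size (nxt p) <= size w')%N.
  by move=> q; rewrite /nxt; case: pselect => // q'; exact: (svalP (cid (ext_min q'))).
pose fix pre n : seq (seq H) := if n is n'.+1 then rcons (pre n') (nxt (pre n')) else [::].
have size_pre n : size (pre n) = n by elim: n => // n IH; rewrite /= size_rcons IH.
have ext_pre n : extp (pre n) by elim: n => //= n IH; case: (nxtP _ IH).
pose mbs n := nxt (pre n).
have nth_pre n i : (i < n)%N -> nth [::] (pre n) i = mbs i.
  elim: n => // n IH; rewrite ltnS leq_eqVlt => /orP [/eqP ->|hi] /=;
    rewrite nth_rcons size_pre.
    by rewrite ltnn eqxx.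
  by rewrite hi IH.
have mbsL n : Lw (mbs n).
  have [u [[Lu _] hu]] := ext_pre n.+1.
  by rewrite -(nth_pre n.+1) // -hu ?size_pre.
have mbsB i j : (i < j)%N -> ~ emb (mbs i) (mbs j).
  move=> ij; have [u [[_ bu] hu]] := ext_pre j.+1.
  have ij' : (i < j.+1)%N by apply: ltn_trans ij _.
  rewrite -(nth_pre j.+1 i) // -(nth_pre j.+1 j) // -!hu ?size_pre //.
  exact: bu.
have mbsM n v : bad v -> (forall i, (i < n)%N -> v i = mbs i) ->
    (size (mbs n) <= size (v n))%N.
  move=> bv hv; apply: (nxtP _ (ext_pre n)).2; exists v; split => // i.
  rewrite size_rcons size_pre ltnS leq_eqVlt => /orP [/eqP ->|hi];
    rewrite nth_rcons size_pre.
    by rewrite ltnn eqxx.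
  by rewrite hi nth_pre //; apply: hv.
have mbs_ne n : mbs n != [::].
  apply/eqP => E; apply: (mbsB n n.+1 (ltnSn n)); rewrite E; by split.
pose a n := head 0 (mbs n).
pose r n := behead (mbs n).
have mbsE n : mbs n = a n :: r n.
  by rewrite /a /r; case: (mbs n) (mbs_ne n).
have aS n : S (a n).
  by have [h _] := mbsL n; apply: h; rewrite mbsE mem_head.
have [phi [p1 p2]] := WO_chain wS aS.
have phimono m n : (m <= n)%N -> (phi m <= phi n)%N.
  by rewrite leq_eqVlt => /orP [/eqP ->//|/p1 /ltnW].
have Lr n : Lw (r n).
  case: (mbsL n) => h1 h2; rewrite mbsE in h1 h2; split.
    by move=> y yr; apply: h1; rewrite in_cons yr orbT.
  by move=> i hi; apply: (h2 i.+1).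
have embB w u : sortedP w -> emb u (behead w) -> emb u w.
  case: w => [|b w] sw [hs hk] //=; split.
    by apply: (leq_trans hs); apply: leqnSn.
  case=> [|k] hk'.
    apply: Rtrans (hk 0%N hk') _.
    by apply: (sw 0%N); rewrite /= ltnS; apply: leq_trans hs.
  apply: Rtrans (hk k.+1 hk') _.
  by apply: (sw k.+1); rewrite /= ltnS; apply: leq_trans hs.
have embC a1 a2 r1 r2 : R a1 a2 -> emb r1 r2 -> emb (a1 :: r1) (a2 :: r2).
  by move=> h [hs hk]; split => //= [[|k]] //= hk'; apply: hk.
pose v i := if (i < phi 0)%N then mbs i else r (phi (i - phi 0)%N).
have badv : bad v.
  split.
    by move=> i; rewrite /v; case: ifP => _; [exact: mbsL | exact: Lr].
  move=> i j ij; rewrite /v; case: ifP => hi; case: ifP => hj.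
  - exact: mbsB.
  - move=> h; apply: (mbsB i (phi (j - phi 0)%N)).
      by apply: leq_trans hi (phimono _ _ (leq0n _)).
    apply: embB; [by case: (mbsL (phi (j - phi 0)%N)) | exact: h].

  - by move: hi; rewrite (ltn_trans ij hj).
  - have kk : (i - phi 0 < j - phi 0)%N.
      by rewrite ltn_sub2r // (leq_ltn_trans _ ij) // leqNgt hi.
    move=> h; apply: (mbsB (phi (i - phi 0)%N) (phi (j - phi 0)%N)); first exact: p1.
    by rewrite !mbsE; apply: embC => //; apply: p2; apply: ltnW.
have := mbsM (phi 0) v badv.
have -> : v (phi 0) = r (phi 0) by rewrite /v ltnn subnn.
have hv : forall i, (i < phi 0)%N -> v i = mbs i by move=> i hi; rewrite /v hi.
by move=> /(_ hv); rewrite mbsE /= ltnn.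
Qed.

Lemma Neumann : WO Mset.
Proof.
move=> P hP; apply: NNPP => nomin.
have step x : P x /\ Mset x -> exists y, (P y /\ Mset y) /\ (R y x /\ y <> x).
  move=> [Px Mx]; apply: NNPP => ny; apply: nomin; exists x; split => // h Ph Mh.
  case: (Rtot x h) => // hx; apply: NNPP => nxh; apply: ny; exists h.
  split => //; split => // E; apply: nxh; rewrite E; exact: Rrefl.
have [x0 [Px0 Mx0]] := hP.
pose T := {x | P x /\ Mset x}.
pose st (z : T) : T := exist _ (sval (cid (step _ (svalP z)))) (svalP (cid (step _ (svalP z)))).1.
pose xs n := sval (iter n st (exist _ x0 (conj Px0 Mx0))).
have xsM n : Mset (xs n) by rewrite /xs; case: (iter n st _) => y [].
have xsS n : R (xs n.+1) (xs n) /\ xs n.+1 <> xs n.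
  rewrite /xs iterS; case: (iter n st _) => z hz /=.
  exact: (svalP (cid (step z (svalP (exist (fun x : H => P x /\ Mset x) z hz))))).2.
have xsD i j : (i < j)%N -> ~ R (xs i) (xs j).
  move=> ij hij.
  have h1 : R (xs j) (xs i.+1).
    apply: (@chain_nat _ (fun a b => R b a) xs) => //.
      by move=> a b c h2 h3; apply: Rtrans h3 h2.
    by move=> n; case: (xsS n).
  case: (xsS i) => h2 h3; apply: h3; apply: Ranti => //.
  exact: Rtrans hij h1.
pose w n := sval (cid (sorted_rep (xsM n))).
have wP n : Lw (w n) /\ xs n = \sum_(y <- w n) y := svalP (cid (sorted_rep (xsM n))).
apply: nobad; exists w; split; first by move=> n; case: (wP n).
move=> i j ij he; apply: (xsD i j ij).
case: (wP i) => _ ->; case: (wP j) => [[hS _] ->].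
apply: emb_sum => // y yw; apply: Spos; exact: hS.
Qed.

End WO.


Section Main.
Local Open Scope ring_scope.
Variables (G : zmodType) (le : G -> G -> Prop) (A : G -> Prop).
Variables (H : zmodType) (rho : G -> H) (alpha : H -> G).
Variables (K : fieldType) (sigma : G -> K) (D : Type).
Hypothesis hG : ordered_abelian_group le.
Hypothesis hAc : convex_subgroup le A.
Hypothesis hrho : quotient_projection rho A.
Hypothesis halpha : transversal rho alpha.
Hypothesis hsig : forall a, A a -> sigma a != 0.

Local Notation R := (leH le rho).

Lemma lrefl x : le x x. Proof. by case: hG. Qed.
Lemma ltrans x y z : le x y -> le y z -> le x z. Proof. by case: hG => _ _ h _ _; apply: h. Qed.
Lemma ltot x y : le x y \/ le y x. Proof. by case: hG. Qed.
Lemma ladd x y z : le x y -> le (x + z) (y + z). Proof. by case: hG => _ _ _ _; apply. Qed.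

Lemma lopp x y z : le x y -> le (z - y) (z - x).
Proof.
move=> /(ladd (z - x - y)).
have -> : x + (z - x - y) = z - y by rewrite addrA subrKC.
by rewrite [z - x - y]addrC addNKr.
Qed.

Lemma rhoD x y : rho (x + y) = rho x + rho y. Proof. by case: hrho. Qed.
Lemma rhoB x y : rho (x - y) = rho x - rho y.
Proof. by rewrite -[in RHS](subrK y x) (rhoD (x - y) y) addrK. Qed.
Lemma rho_surj h : exists g, rho g = h. Proof. by case: hrho => _ h1 _; apply: h1. Qed.
Lemma kerA g : rho g = 0 <-> A g. Proof. by case: hrho => _ _; apply. Qed.
Lemma AB x y : A x -> A y -> A (x - y). Proof. by case: hAc => [[_ h] _]; apply: h. Qed.
Lemma A0 : A 0. Proof. by case: hAc => [[]]. Qed.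
Lemma AN x : A x -> A (- x). Proof. by move=> h; rewrite -sub0r; apply: AB => //; apply: A0. Qed.
Lemma Aconv a b x : A a -> A b -> le a x -> le x b -> A x.
Proof. by case: hAc => _; apply. Qed.

Lemma Rrefl h : R h h.
Proof. by case: (rho_surj h) => g <-; exists g, g; split => //; apply: lrefl. Qed.

Lemma Rtrans a b c : R a b -> R b c -> R a c.
Proof.
move=> [g1 [g1' [E1 E1' l1]]] [g2 [g2' [E2 E2' l2]]].
exists (g1 + (g2 - g1')), g2'; split => //.
  by rewrite rhoD rhoB E1' E2 subrr addr0.
apply: ltrans l2; have := ladd (g2 - g1') l1; by rewrite subrKC.
Qed.

Lemma Ranti a b : R a b -> R b a -> a = b.
Proof.
move=> [g [g' [Eg Eg' l1]]] [k [k' [Ek Ek' l2]]].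
have Ad1 : A (g' - k) by apply/kerA; rewrite rhoB Eg' Ek subrr.
have Ad2 : A (k' - g) by apply/kerA; rewrite rhoB Eg Ek' subrr.
have h1 : le (g - k) (g' - k) by apply: ladd.
have h2 : le (g - k') (g - k) by apply: lopp.
have : A (g - k).
  apply: (Aconv (AN Ad2) Ad1) => //; by rewrite opprB.
move=> /kerA; rewrite rhoB Eg Ek => /eqP; rewrite subr_eq0 => /eqP.
done.
Qed.

Lemma Rtot a b : R a b \/ R b a.
Proof.
case: (rho_surj a) => g <-; case: (rho_surj b) => g' <-.
by case: (ltot g g') => h; [left|right]; [exists g, g' | exists g', g].
Qed.

Lemma Radd x y z : R x y -> R (x + z) (y + z).
Proof.
move=> [g [g' [<- <- l]]]; case: (rho_surj z) => k <-.
by exists (g + k), (g' + k); split; rewrite ?rhoD //; apply: ladd.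
Qed.

Definition cc (h h' : H) : K := sigma (- beta alpha h h').

Lemma cc_neq0 h h' : cc h h' != 0.
Proof.
apply: hsig; apply: AN; apply/kerA.
  case: halpha => ha _; by rewrite /beta !rhoB !ha addrAC addrK subrr.
Qed.

Lemma cc_sym h h' : cc h h' = cc h' h.
Proof. by rewrite /cc /beta (addrC h' h) (addrAC (alpha (h + h'))). Qed.

Variable f : H -> K.
Hypothesis wX : WO R (fun h => f h != 0).
Variable h0 : H.
Hypothesis Xh0 : f h0 != 0.
Hypothesis h0min : forall h, f h != 0 -> R h0 h.

Definition S s := f (s + h0) != 0 /\ s <> 0.

Lemma wS : WO R S.
Proof.
apply: (@WO_sub _ _ _ (fun h => f (h + h0) != 0)); first by move=> s [].
exact: (@WO_shift _ _ Radd (fun h => f h != 0) h0 wX).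
Qed.

Lemma Spos s : S s -> R 0 s.
Proof.
move=> [hs _]; have := h0min hs; rewrite -{1}(add0r h0).
exact: (@Rcancel _ _ Radd 0 s h0).
Qed.

Definition M' m := Mset S (m + h0).

Lemma wM : WO R M'.
Proof. exact: (WO_shift Radd (Neumann Rrefl Rtrans Ranti Rtot Radd wS Spos)). Qed.

Lemma Mclos x s : Mset S x -> S s -> Mset S (x + s).
Proof.
move=> [w [wS' ->]] Ss; exists (s :: w); split; last by rewrite big_cons addrC.
by move=> y; rewrite in_cons => /orP [/eqP ->|/wS'].
Qed.

Lemma M0 : Mset S 0.
Proof. by exists [::]; rewrite big_nil. Qed.

Definition fib l : seq H := sval (cid (WO_fiber Rrefl Rtrans Ranti Radd l wM wX)).
Lemma fibP l : uniq (fib l) /\ forall h, h \in fib l <-> M' h /\ f (l - h) != 0.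
Proof. exact: (svalP (cid (WO_fiber Rrefl Rtrans Ranti Radd l wM wX))). Qed.

Definition Rm h m := M' h /\ R h m /\ h <> m.

Lemma wfRm : well_founded Rm.
Proof.
have accM y : M' y -> Acc Rm y.
  move=> My; apply: NNPP => nA.
  have [y0 [nA0 My0 m0]] := @wM (fun y => ~ Acc Rm y) (ex_intro _ y (conj nA My)).
  apply: nA0; constructor => z [Mz [lz nz]]; apply: NNPP => nAz.
  by apply: nz; apply: Ranti => //; apply: m0.
by move=> x; constructor => z [Mz _]; apply: accM.
Qed.

Definition extf m (rec : forall h, Rm h m -> K) h : K :=
  match pselect (Rm h m) with left p => rec h p | right _ => 0 end.

Definition F m (rec : forall h, Rm h m -> K) : K :=
  if `[< M' m >] then
    (one_series K (m + h0) - \sum_(h <- fib (m + h0) | h != m)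
        extf rec h * f (m + h0 - h) * cc h (m + h0 - h)) / (f h0 * cc m h0)
  else 0.

Definition g := Fix wfRm (fun _ => K) F.

Lemma fib_lt m h : h \in fib (m + h0) -> R h m.
Proof.
move=> /(fibP _).2 [_ /h0min] /(Radd (h - h0)).
by rewrite subrKC addrA subrK addrK.
Qed.

Lemma g_eq m : g m = if `[< M' m >] then
    (one_series K (m + h0) - \sum_(h <- fib (m + h0) | h != m)
        g h * f (m + h0 - h) * cc h (m + h0 - h)) / (f h0 * cc m h0)
  else 0.
Proof.
rewrite /g Fix_eq; last first.
  move=> x f1 f2 E; rewrite /F.
  have -> : extf f1 = extf f2.
    by apply: funext => h; rewrite /extf; case: pselect.
  done.
rewrite /F; case: asboolP => // Mm.
congr ((_ - _) / _).
rewrite big_seq_cond [RHS]big_seq_cond; apply: eq_bigr => h /andP [hin hm].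
rewrite /extf; case: pselect => // nR; exfalso; apply: nR.
split; first by case: ((fibP (m + h0)).2 h).1.
by split; [apply: fib_lt | apply/eqP].
Qed.

Lemma g_supp m : g m != 0 -> M' m.
Proof. by rewrite g_eq; case: asboolP => // _; rewrite eqxx. Qed.

Lemma Tconv_M m : M' m ->
  \sum_(h <- fib (m + h0)) g h * f (m + h0 - h) * cc h (m + h0 - h) = one_series K (m + h0).
Proof.
move=> Mm.
have gm : g m * (f h0 * cc m h0) = one_series K (m + h0) -
    \sum_(h <- fib (m + h0) | h != m) g h * f (m + h0 - h) * cc h (m + h0 - h).
  by rewrite g_eq (asboolT Mm) divfK // mulf_neq0 // cc_neq0.
have E0 : m + h0 - m = h0 by rewrite (addrC m h0) addrK.
have hin : m \in fib (m + h0) by apply/(fibP _).2; split => //; rewrite E0.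
rewrite (bigD1_seq m hin (fibP _).1) /= E0.
move/eqP: gm; rewrite eq_sym subr_eq => /eqP ->.
by rewrite mulrA.
Qed.

Lemma Tconv l :
  \sum_(h <- fib l) g h * f (l - h) * cc h (l - h) = one_series K l.
Proof.
case: (pselect (M' (l - h0))) => Ml.
  by have := Tconv_M Ml; rewrite subrK.
rewrite big1_seq.
  rewrite /one_series; case: eqP => // l0; exfalso; apply: Ml.
  by rewrite /M' subrK l0; apply: M0.
move=> h /andP [_ hin]; exfalso.
case: ((fibP l).2 h).1 => // Mh Xh; apply: Ml.
have [s0|s0] := eqVneq (l - h - h0) 0.
  move/eqP: s0; rewrite subr_eq0 => /eqP E.
  by have -> : l - h0 = h by rewrite -E subKr.
have Ss : S (l - h - h0) by split; [rewrite subrK | apply/eqP].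
have := Mclos Mh Ss; rewrite /M' subrK.
have E : l - h - h0 = l - (h + h0) by rewrite opprD addrA.
by rewrite E addrC subrK.
Qed.

Lemma prod_gf l : prod_coef alpha sigma g f l (one_series K l).
Proof.
exists [seq h <- fib l | g h != 0]; split.
- exact: filter_uniq (fibP l).1.
- move=> h; rewrite mem_filter; split.
    by move=> /andP [gh /(fibP l).2 [_ Xh]].
  move=> [gh Xh]; rewrite gh /=; apply/(fibP l).2; split => //; exact: g_supp.
rewrite -(Tconv l) big_filter [RHS]big_mkcond; apply: eq_bigr => h _.
case: (eqVneq (g h) 0) => [->|nz]; first by rewrite !mul0r.
by [].
Qed.

Lemma prod_fg l : prod_coef alpha sigma f g l (one_series K l).
Proof.
have [s [us ms es]] := prod_gf l.
have inj : injective (fun h : H => l - h) by move=> a b /addrI /oppr_inj.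
exists [seq l - h | h <- s]; split.
- by rewrite map_inj_uniq.
- move=> h'; rewrite -{1}(subKr l h') (mem_map inj) ms subKr.
  by split; case.
rewrite es big_map; apply: eq_bigr => h _.
rewrite subKr; have := cc_sym h (l - h); rewrite /cc => ->.
by rewrite [g h * _]mulrC.
Qed.

Lemma wg : support_well_ordered le rho g.
Proof. exact: (WO_sub g_supp wM). Qed.

Variables (e : nat -> D) (iX : H -> D).
Hypothesis einj : injective e.
Hypothesis iXinj : forall h h', f h != 0 -> f h' != 0 -> iX h = iX h' -> h = h'.

Lemma card_g : support_card_le_delta D g.
Proof.
have [code cinj] := seq_code einj.
pose rep m := match pselect (M' m) with left p => sval (cid p) | right _ => [::] end.
have repP m : M' m -> (forall y, y \in rep m -> S y) /\ m + h0 = \sum_(y <- rep m) y.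
  by move=> Mm; rewrite /rep; case: pselect => // p; exact: (svalP (cid p)).
exists (fun m => code (map (fun s => iX (s + h0)) (rep m))).
move=> h h' gh gh' /cinj E.
have [r1 e1] := repP _ (g_supp gh); have [r2 e2] := repP _ (g_supp gh').
suff E' : rep h = rep h' by apply: (addIr h0); rewrite e1 e2 E'.
move: E r1 r2; elim: (rep h) (rep h') => [|a s IH] [|b t] //= [Eab Est] r1 r2.
have Sa : S a by apply: r1; rewrite mem_head.
have Sb : S b by apply: r2; rewrite mem_head.
congr (_ :: _).
  by apply: (addIr h0); apply: iXinj => //; [case: Sa | case: Sb].
apply: IH => //.
  by move=> y ys; apply: r1; rewrite in_cons ys orbT.
by move=> y ys; apply: r2; rewrite in_cons ys orbT.
Qed.

Lemma main_ex : exists g, in_series_ring le rho D g /\ is_inverse alpha sigma f g.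
Proof.
exists g; split; first by split; [exact: wg | exact: card_g].
by split; [exact: prod_fg | exact: prod_gf].
Qed.

End Main.

Local Open Scope ring_scope.

Theorem proposition2p5
  (G : zmodType) (le : G -> G -> Prop) (A : G -> Prop)
  (H : zmodType) (rho : G -> H) (alpha : H -> G)
  (K : fieldType) (v : K -> G) (p : nat) (sigma : G -> K) (D : Type)
  (hG : ordered_abelian_group le)
  (hA : smallest_nonzero_convex_subgroup le A)
  (hrho : quotient_projection rho A)
  (halpha : transversal rho alpha)
  (hv : valuation_onto le v A)
  (hchar : char0 K)
  (hres : residue_char le v p)
  (hcomplete : omega_pseudo_complete le v)
  (hsigma : cross_section v sigma A)
  (hD : infinite_cardinal D)
  (f : H -> K)
  (hf : in_series_ring le rho D f)
  (hf0 : exists h, f h != 0) :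
  exists g : H -> K, in_series_ring le rho D g /\ is_inverse alpha sigma f g.
Proof.
case: hA => hAc _ _.
have hsig : forall a, A a -> sigma a != 0 by case: hsigma.
case: hf => wf [iX iXinj].
case: hD => e einj.
case: hf0 => h1 h1nz.
have [h0 [_ Xh0 h0min]] := wf (fun _ => True) (ex_intro _ h1 (conj I h1nz)).
have h0min' : forall h, f h != 0 -> leH le rho h0 h by move=> h; apply: h0min.
exact: (@main_ex G le A H rho alpha K sigma D hG hAc hrho halpha hsig f wf h0 Xh0 h0min' e iX einj iXinj).
Qed.
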